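(* Let $S=s_1,\ldots,s_n$ be a sequence of positive real numbers, $\gamma>0$, $k$ a positive integer. Let $(L,\alpha,\beta)$ be an optimal solution of $\textsc{Exp}$ for $S,\gamma,k$. Let $g=(\prod_{i=1}^ns_i)^{1/n}$ and $\psi=n\log g$. Let $\epsilon_1,\epsilon_2>0$ and let $\alpha',\beta'$ satisfy $\beta\le\beta'\le\beta(1+\epsilon_1)$ and $\alpha\le\alpha'\le\alpha(1+\epsilon_2)$. Then \[ \mathrm{score}_{\exp}(L,S;\alpha',\beta',\gamma)-\psi\le c\,\big(\mathrm{score}_{\exp}(L,S;\alpha,\beta,\gamma)-\psi\big),\qquad c=(1+\epsilon_1)(1+\epsilon_2)^k. \]
   Context: A level sequence is $L=\ell_1,\ldots,\ell_n$ of integers with $0\le\ell_i\le k$; set $\ell_0=0$. The penalty is $\mathrm{pen}(x,y)=\max(y-x,0)\,\gamma\log n$; $p_{\exp}(s;\lambda)=\lambda e^{-\lambda s}$; $\mathrm{score}_{\exp}(L,S;\alpha,\beta,\gamma)=\sum_{i=1}^n\big[-\log p_{\exp}(s_i;\beta\alpha^{\ell_i})+\mathrm{pen}(\ell_{i-1},\ell_i)\big]$. Problem $\textsc{Exp}$: given $S,\gamma,k$, find $L$ and parameters $\alpha>1$, $\beta>0$ minimizing this score. The paper assumes $s_i>0$ for this problem. *)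

(* Defs.v *)
From Stdlib Require Import Reals List Lra.
Import ListNotations.
Open Scope R_scope.

Definition p_exp (s lam : R) : R := lam * exp (- lam * s).

Definition pen (gamma : R) (n : nat) (x y : nat) : R :=
  Rmax (INR y - INR x) 0 * gamma * ln (INR n).

(* sum over i of [ -log p_exp(s_i; beta alpha^{l_i}) + pen(l_{i-1}, l_i) ],
   with prev = l_{i-1} (l_0 = 0). *)
Fixpoint score_aux (alpha beta gamma : R) (n : nat) (prev : nat)
    (L : list nat) (S : list R) : R :=
  match L, S with
  | l :: L', s :: S' =>
      (- ln (p_exp s (beta * alpha ^ l)) + pen gamma n prev l)
      + score_aux alpha beta gamma n l L' S'
  | _, _ => 0
  end.

Definition score_exp (L : list nat) (S : list R) (alpha beta gamma : R) : R :=
  score_aux alpha beta gamma (length S) 0 L S.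

Definition valid_levels (k : nat) (S : list R) (L : list nat) : Prop :=
  length L = length S /\ Forall (fun l => (l <= k)%nat) L.

Definition optimal_exp (S : list R) (gamma : R) (k : nat)
    (L : list nat) (alpha beta : R) : Prop :=
  valid_levels k S L /\ 1 < alpha /\ 0 < beta /\
  forall (L' : list nat) (alpha' beta' : R),
    valid_levels k S L' -> 1 < alpha' -> 0 < beta' ->
    score_exp L S alpha beta gamma <= score_exp L' S alpha' beta' gamma.

Definition prod_list (S : list R) : R := fold_right Rmult 1 S.

Definition geo_mean (S : list R) : R :=
  Rpower (prod_list S) (1 / INR (length S)).

Definition psi_of (S : list R) : R := INR (length S) * ln (geo_mean S).

(* Main.v *)
Require Import Defs.
From Stdlib Require Import Reals List Lra Lia.
Open Scope R_scope.

Lemma ln_le_xm1 x : 0 < x -> ln x <= x - 1.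
Proof. intro Hx. pose proof (exp_ineq1_le (ln x)). rewrite exp_ln in H; lra. Qed.

Lemma ln_le x y : 0 < x -> x <= y -> ln x <= ln y.
Proof. intros Hx [h|h]. left; apply ln_increasing; auto. subst; lra. Qed.

Fixpoint pens (gamma : R) (n prev : nat) (L : list nat) (S : list R) : R :=
  match L, S with
  | l :: L', s :: S' => pen gamma n prev l + pens gamma n l L' S'
  | _, _ => 0 end.

Fixpoint SX (a b : R) (L : list nat) (S : list R) : R :=
  match L, S with
  | l :: L', s :: S' => b * a ^ l * s + SX a b L' S'
  | _, _ => 0 end.

Fixpoint SL (a b : R) (L : list nat) (S : list R) : R :=
  match L, S with
  | l :: L', s :: S' => ln (b * a ^ l * s) + SL a b L' S'
  | _, _ => 0 end.

Fixpoint lnS (S : list R) : R :=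
  match S with s :: S' => ln s + lnS S' | _ => 0 end.

Lemma decomp a b g n prev L S :
  length L = length S -> Forall (fun s => 0 < s) S -> 0 < a -> 0 < b ->
  score_aux a b g n prev L S = pens g n prev L S + SX a b L S - SL a b L S + lnS S.
Proof.
  intros HL HS Ha Hb. revert prev S HL HS.
  induction L as [|l L IH]; intros prev S HL HS; destruct S as [|s S]; simpl in *; try lia.
  - lra.
  - inversion HS; subst. rewrite IH by (auto; lia).
    assert (Hl : 0 < b * a ^ l) by (apply Rmult_lt_0_compat; auto; apply pow_lt; auto).
    unfold p_exp. rewrite ln_mult, ln_exp by (auto; apply exp_pos).
    rewrite (ln_mult (b * a ^ l) s) by auto. lra.
Qed.

Lemma pens_nonneg g n prev L S : 0 < g -> 0 <= pens g n prev L S.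
Proof.
  intro Hg. revert prev S. induction L as [|l L IH]; intros prev S; destruct S; simpl; try lra.
  pose proof (IH l S). unfold pen.
  assert (0 <= ln (INR n)).
  { destruct n. simpl. unfold ln; case Rlt_dec; intro h; [exfalso; lra | lra]. rewrite <- ln_1. apply ln_le. lra.
    rewrite S_INR. pose proof (pos_INR n). lra. }
  assert (0 <= Rmax (INR l - INR prev) 0) by apply Rmax_r.
  assert (0 <= Rmax (INR l - INR prev) 0 * g * ln (INR n)).
  { apply Rmult_le_pos; auto. apply Rmult_le_pos; lra. }
  lra.
Qed.

Lemma SX_scale a b t L S : SX a (b * t) L S = t * SX a b L S.
Proof. revert S; induction L; destruct S; simpl; try lra. rewrite IHL. ring. Qed.

Lemma SL_scale a b t L S : length L = length S -> Forall (fun s => 0 < s) S ->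
  0 < a -> 0 < b -> 0 < t ->
  SL a (b * t) L S = SL a b L S + INR (length S) * ln t.
Proof.
  intros HL HS Ha Hb Ht. revert S HL HS.
  induction L as [|l L IH]; intros S HL HS; destruct S as [|s S]; simpl in *; try lia.
  - lra.
  - inversion HS; subst. rewrite IH by (auto; lia).
    assert (0 < b * a ^ l * s) by (repeat apply Rmult_lt_0_compat; auto; apply pow_lt; auto).
    replace (b * t * a ^ l * s) with (t * (b * a ^ l * s)) by ring.
    rewrite ln_mult by auto. destruct (length S); simpl; ring.
Qed.

Lemma SL_le_SX a b L S : length L = length S -> Forall (fun s => 0 < s) S ->
  0 < a -> 0 < b -> SL a b L S <= SX a b L S - INR (length S).
Proof.
  intros HL HS Ha Hb. revert S HL HS.
  induction L as [|l L IH]; intros S HL HS; destruct S as [|s S]; simpl in *; try lia.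
  - lra.
  - inversion HS; subst. pose proof (IH S ltac:(lia) H2).
    assert (0 < b * a ^ l * s) by (repeat apply Rmult_lt_0_compat; auto; apply pow_lt; auto).
    pose proof (ln_le_xm1 _ H0). destruct (length S); simpl in *; lra.
Qed.

Lemma SX_bound a b a' b' e1 e2 k L S : Forall (fun s => 0 < s) S ->
  Forall (fun l => (l <= k)%nat) L -> 0 < a -> 0 < b -> 0 < e1 -> 0 < e2 ->
  b <= b' <= b * (1 + e1) -> a <= a' <= a * (1 + e2) ->
  SX a' b' L S <= (1 + e1) * (1 + e2) ^ k * SX a b L S
  /\ SL a b L S <= SL a' b' L S.
Proof.
  intros HS Hk Ha Hb He1 He2 Hb' Ha'. revert S HS.
  induction L as [|l L IH]; intros S HS; destruct S as [|s S]; simpl in *; try lra.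
  inversion HS as [|? ? Hs0 HS']; subst. inversion Hk as [|? ? Hl0 Hk']; subst. destruct (IH Hk' S HS') as [I1 I2].
  assert (Hp : 0 < a ^ l) by (apply pow_lt; auto).
  assert (Hx : 0 < b * a ^ l * s) by (repeat apply Rmult_lt_0_compat; auto).
  assert (Hp1 : a ^ l <= a' ^ l) by (apply pow_incr; lra).
  assert (Hp2 : a' ^ l <= a ^ l * (1 + e2) ^ k).
  { apply Rle_trans with ((a * (1 + e2)) ^ l). apply pow_incr; lra.
    rewrite Rpow_mult_distr. apply Rmult_le_compat_l. lra. apply Rle_pow. lra. auto. }
  assert (Hq : 1 <= (1 + e2) ^ k) by (apply pow_R1_Rle; lra).
  assert (M1 : b * a ^ l * s <= b' * a' ^ l * s).
  { apply Rmult_le_compat_r. lra. apply Rmult_le_compat; lra. }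
  assert (M2 : b' * a' ^ l * s <= (1 + e1) * (1 + e2) ^ k * (b * a ^ l * s)).
  { replace ((1 + e1) * (1 + e2) ^ k * (b * a ^ l * s)) with
      ((b * (1 + e1)) * (a ^ l * (1 + e2) ^ k) * s) by ring.
    apply Rmult_le_compat_r. lra. apply Rmult_le_compat; lra. }
  split.
  - lra.
  - pose proof (ln_le _ _ Hx M1). lra.
Qed.

Lemma psi_eq S : Forall (fun s => 0 < s) S -> psi_of S = lnS S.
Proof.
  intro HS. unfold psi_of, geo_mean, Rpower.
  assert (Hp : ln (prod_list S) = lnS S /\ 0 < prod_list S).
  { induction S as [|s S IH]; simpl. split. apply ln_1. lra.
    inversion HS; subst. destruct (IH H2). split.
    rewrite ln_mult; auto; lra. apply Rmult_lt_0_compat; auto. }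
  destruct Hp as [Hp _]. rewrite ln_exp, Hp.
  destruct (length S) eqn:E.
  - destruct S; simpl in *; try discriminate. lra.
  - field. apply not_0_INR. lia.
Qed.

Theorem lemma10 (S : list R) (gamma : R) (k : nat) (L : list nat)
    (alpha beta : R)
    (hS : Forall (fun s => 0 < s) S) (hgamma : 0 < gamma) (hk : (1 <= k)%nat)
    (hopt : optimal_exp S gamma k L alpha beta)
    (eps1 eps2 alpha' beta' : R) (he1 : 0 < eps1) (he2 : 0 < eps2)
    (hb : beta <= beta' <= beta * (1 + eps1))
    (ha : alpha <= alpha' <= alpha * (1 + eps2)) :
  score_exp L S alpha' beta' gamma - psi_of S
    <= (1 + eps1) * (1 + eps2) ^ k * (score_exp L S alpha beta gamma - psi_of S).
Proof.
  destruct hopt as [[HL Hk] [Ha [Hb Hopt]]].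
  unfold score_exp in *. rewrite psi_eq by auto.
  rewrite !decomp by (auto; lra).
  set (n := INR (length S)).
  set (P := pens gamma (length S) 0 L S).
  set (X := SX alpha beta L S). set (Y := SL alpha beta L S).
  destruct (SX_bound alpha beta alpha' beta' eps1 eps2 k L S hS Hk ltac:(lra) Hb he1 he2 hb ha)
    as [B1 B2].
  pose proof (SL_le_SX alpha beta L S HL hS ltac:(lra) Hb) as B3.
  pose proof (pens_nonneg gamma (length S) 0 L S hgamma) as B4.
  fold X in B1, B3. fold Y in B2, B3. fold n in B3. fold P in B4.
  assert (Hn : 0 <= n) by apply pos_INR.
  assert (HXn : X <= n).
  { destruct (Rle_or_lt X n) as [h|h]; auto. exfalso.
    set (t := (n + X) / (2 * X)).
    assert (HX : 0 < X) by lra.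
    assert (Ht0 : 0 < t) by (unfold t; apply Rdiv_lt_0_compat; lra).
    assert (Ht1 : t < 1) by (unfold t; apply (Rmult_lt_reg_r (2 * X)); [lra|]; unfold Rdiv; rewrite Rmult_assoc, Rinv_l; lra).
    pose proof (Hopt L alpha (beta * t) (conj HL Hk) Ha ltac:(apply Rmult_lt_0_compat; lra)) as O.
    rewrite !decomp in O by (auto; try lra; apply Rmult_lt_0_compat; lra).
    rewrite SX_scale, SL_scale in O by (auto; lra).
    fold P X Y n in O.
    pose proof (ln_le_xm1 (/ t) ltac:(apply Rinv_0_lt_compat; lra)) as L1.
    rewrite ln_Rinv in L1 by lra.
    assert (E : X * (1 - t) <= n * (/ t - 1)).
    { assert (n * ln t >= n * - (/ t - 1)).
      { apply Rle_ge. apply Rmult_le_compat_l; lra. }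
      nra. }
    assert (E1 : X * (1 - t) = (X - n) / 2) by (unfold t; field; lra).
    assert (E2 : / t - 1 = (X - n) / (n + X)) by (unfold t; field; lra).
    rewrite E1, E2 in E.
    assert (E3 : n * ((X - n) / (n + X)) < (X - n) / 2).
    { unfold Rdiv. rewrite <- Rmult_assoc.
      apply Rmult_lt_reg_r with (n + X). lra.
      rewrite Rmult_assoc, Rinv_l by lra. nra. }
    lra. }
  assert (Hc : 1 <= (1 + eps1) * (1 + eps2) ^ k).
  { pose proof (pow_R1_Rle (1 + eps2) k ltac:(lra)). nra. }
  assert (HY : Y <= 0) by lra.
  set (c := (1 + eps1) * (1 + eps2) ^ k) in *.
  assert ((c - 1) * Y <= (c - 1) * P) by (apply Rmult_le_compat_l; lra).
  nra.
Qed.
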